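(* Let $G$ be a finite non-abelian group and $S\subseteq G$ a nonempty subset, with $\partial S$ its edge boundary in $\mathcal C_G$. (A) If $S$ satisfies any one of: (1) $S\cap Z(G)=\emptyset$; (2) $Z(G)\subseteq S$ and $|S|\le |G|/2$; (3) $S\subseteq Z(G)$; then $\frac{|\partial S|}{|S|}\ge |Z(G)|$. (B) If $S\cap Z(G)\neq\emptyset$ and $Z(G)\setminus S\neq\emptyset$, then $$|\partial S|=|S|\,|Z(G)|+|Z(G)\cap S|\big(|G|-2|S|-|Z(G)\setminus S|\big)+\sum_{u\in S\setminus Z(G)}|\mathcal F_u\setminus S|,$$ where $\mathcal F_u=C(u)\setminus Z(G)$ for $u\in G\setminus Z(G)$.
   Context: For a finite group $G$, the commuting graph $\mathcal C_G$ is the simple undirected graph with vertex set $G$ in which distinct $u,v\in G$ are adjacent iff $uv=vu$. $Z(G)$ is the center of $G$ and $C(v)=\{w\in G: wv=vw\}$ the centralizer of $v$. For $S\subseteq G$, $\partial S$ is the set of edges of $\mathcal C_G$ with one endpoint in $S$ and the other in $G\setminus S$. *)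

(* Defs.v *)
From mathcomp Require Import all_boot all_order all_algebra all_fingroup all_solvable.
Set Implicit Arguments. Unset Strict Implicit. Unset Printing Implicit Defensive.

Local Open Scope group_scope.

(* Edge set of the commuting graph restricted to the boundary of S:
   unordered edges {u, v} with u in S, v outside S, and u v = v u.
   (u <> v is automatic since u \in S and v \notin S.) *)
Definition boundary (gT : finGroupType) (S : {set gT}) : {set {set gT}} :=
  [set [set u; v] | u in S, v in ~: S & u * v == v * u].

Definition Fu (gT : finGroupType) (u : gT) : {set gT} :=
  'C[u] :\: 'Z([set: gT]).

(* Main.v *)
Require Import Defs.
From mathcomp Require Import all_boot all_order all_algebra all_fingroup all_solvable.
From mathcomp Require Import zify.
Import GRing.Theory.
Local Open Scope group_scope.

Lemma card_boundary (gT : finGroupType) (S : {set gT}) :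
  #|boundary S| = (\sum_(u in S) #|'C[u] :\: S|)%N.
Proof.
pose P := [set p : gT * gT | [&& p.1 \in S, p.2 \notin S & p.1 * p.2 == p.2 * p.1]].
have -> : boundary S = (fun p : gT * gT => [set p.1; p.2]) @: P.
  apply/setP => X; apply/imset2P/imsetP.
  - case=> u v uS; rewrite inE => /andP[vS c] ->.
    by exists (u, v) => //; rewrite inE /= uS -(in_setC v S) vS.
  - case=> [[u v]]; rewrite inE /= => /and3P[uS vS c] ->.
    by exists u v => //; rewrite inE in_setC vS.
rewrite card_in_imset; last first.
  move=> [u1 v1] [u2 v2]; rewrite !inE /= => /and3P[u1S v1S _] /and3P[u2S v2S _] E.
  have h1 : u1 \in [set u2; v2] by rewrite -E !inE eqxx.
  have h2 : v1 \in [set u2; v2] by rewrite -E !inE eqxx orbT.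
  rewrite !inE in h1 h2.
  case/orP: h1 => /eqP h1; last by subst; rewrite u1S in v2S.
  case/orP: h2 => /eqP h2; first by subst; rewrite u2S in v1S.
  by subst.
rewrite -sum1_card.
rewrite (eq_bigl (fun p : gT * gT => (p.1 \in S) && ((p.2 \notin S) && (p.1 * p.2 == p.2 * p.1)))); last first.
  by move=> p; rewrite inE.
rewrite -(pair_big_dep (fun u => u \in S) (fun u v => (v \notin S) && (u * v == v * u)) (fun _ _ => 1%N)) /=.
apply: eq_bigr => u uS; rewrite -sum1_card; apply: eq_bigl => v.
rewrite in_setD; congr (_ && _).
by apply/eqP/cent1P => h; apply: esym.
Qed.

Lemma cent1_center (gT : finGroupType) (u : gT) :
  u \in 'Z([set: gT]) -> 'C[u] = [set: gT].
Proof.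
move=> /centerP[_ cu]; apply/setP => v; rewrite in_setT; apply/cent1P.
by apply: esym; apply: cu; rewrite inE.
Qed.

Lemma center_in_cent1 (gT : finGroupType) (u z : gT) :
  z \in 'Z([set: gT]) -> z \in 'C[u].
Proof.
move=> /centerP[_ cz]; apply/cent1P; apply: cz; by rewrite inE.
Qed.

Lemma card_boundary2 (gT : finGroupType) (S : {set gT}) :
  #|boundary S| = (#|S :&: 'Z([set: gT])| * #|~: S|
     + #|S :\: 'Z([set: gT])| * #|'Z([set: gT]) :\: S|
     + \sum_(u in S :\: 'Z([set: gT])) #|Fu u :\: S|)%N.
Proof.
rewrite card_boundary (big_setID 'Z([set: gT])) /= -addnA.
congr (_ + _)%N.
  rewrite -sum_nat_const; apply: eq_bigr => u; rewrite inE => /andP[_ uZ].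
  by rewrite cent1_center // setTD.
rewrite -sum_nat_const -big_split /=; apply: eq_bigr => u; rewrite inE => /andP[uZ _].
rewrite -(cardsID 'Z([set: gT]) ('C[u] :\: S)); congr (_ + _)%N.
  apply: eq_card => v; rewrite in_setI !in_setD; apply/idP/idP.
    by case/andP=> /andP[-> _] ->.
  by case/andP=> -> vZ; rewrite vZ center_in_cent1.
by apply: eq_card => v; rewrite /Fu !in_setD andbCA.
Qed.

Lemma center_small (gT : finGroupType) :
  ~~ abelian [set: gT] -> (2 * #|'Z([set: gT])| <= #|[set: gT]|)%N.
Proof.
move=> nab.
have := Lagrange (center_sub [group of [set: gT]]).
have : #|[set: gT] : 'Z([set: gT])| != 1%N.
  apply: contra nab => /eqP h.
  have e : 'Z([set: gT]) = [set: gT].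
    apply/eqP; rewrite eqEcard center_sub /=.
    by rewrite -(Lagrange (center_sub [group of [set: gT]])) h muln1.
  by apply/center_idP.
have : (0 < #|[set: gT] : 'Z([set: gT])|)%N by apply: indexg_gt0.
move: #|[set: gT] : 'Z([set: gT])| => k k0 k1 <-.
have k2 : (2 <= k)%N by lia.
by rewrite mulnC leq_mul2l k2 orbT.
Qed.

Theorem lemma3p5 (gT : finGroupType) (S : {set gT}) :
  ~~ abelian [set: gT] -> S != set0 ->
  ( ( [disjoint S & 'Z([set: gT])]
      \/ ('Z([set: gT]) \subset S /\ (#|S| * 2 <= #|[set: gT]|)%N)
      \/ S \subset 'Z([set: gT]) ) ->
    (#|S| * #|'Z([set: gT])| <= #|boundary S|)%N )
  /\
  ( S :&: 'Z([set: gT]) != set0 -> 'Z([set: gT]) :\: S != set0 ->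
    (#|boundary S| : int)
      = (#|S| * #|'Z([set: gT])|)%:Z
        + (#|'Z([set: gT]) :&: S|)%:Z
            * ((#|[set: gT]|)%:Z - 2 * (#|S|)%:Z - (#|'Z([set: gT]) :\: S|)%:Z)
        + (\sum_(u in S :\: 'Z([set: gT])) #|Fu u :\: S|)%:Z )%R.
Proof.
move=> nab _.
have hz := center_small _ nab.
have hN := card_boundary2 _ S.
have hS := cardsID 'Z([set: gT]) S.
have hZ := cardsID S 'Z([set: gT]).
have hC := cardsC S. rewrite -cardsT in hC.
rewrite setIC in hZ.
move: hN hS hZ hC hz.
set T := (\sum_(u in _) _)%N.
set N := #|boundary S|; set a := #|S :&: _|; set d := #|S :\: _|;
set b := #|_ :\: S|; set c := #|~: S|; set s := #|S|; set z := #|'Z(_)|;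
set n := #|[set: gT]|.
move=> hN hS hZ hC hz; split; last first.
  move=> _ _; rewrite hN ['Z(_) :&: S]setIC -/a -hC -hS -hZ; nia.
case=> [hd|[[hsub hs]|hsub]].
- have a0 : a = 0%N by rewrite /a; move/disjoint_setI0: hd => ->; rewrite cards0.
  nia.
- have b0 : b = 0%N by rewrite /b; move: hsub; rewrite -setD_eq0 => /eqP ->; rewrite cards0.
  nia.
- have d0 : d = 0%N by rewrite /d; move: hsub; rewrite -setD_eq0 => /eqP ->; rewrite cards0.
  have : (s <= z)%N by rewrite /s /z; apply: subset_leq_card.
  nia.
Qed.
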